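(* Let $d\ge2$, $\Psi(\mathbf x)=-\sum_{i=1}^d\ln\bar x_i$ and $f(\mathbf w)=-\log\langle\mathbf r,\bar{\mathbf w}\rangle$ for some $\mathbf r\in[0,1]^d\setminus\{\mathbf 0\}$. Then for all $\mu\in(0,1)$ and all $\tilde{\mathbf w}\in\mathcal C_{d-1}$ with $\bar{\tilde w}_i>0$ for all $i\in\{1,\dots,d\}$, setting $\mathbf w=(1-\mu)\tilde{\mathbf w}+\mu\mathbf 1/d$, we have $$\nabla f(\mathbf w)\nabla f(\mathbf w)^\top\preceq(1-\mu)^{-2}\nabla^2\Psi(\tilde{\mathbf w}),$$ and furthermore $\|\nabla f(\mathbf w)\|^2_{\nabla^{-2}\Psi(\tilde{\mathbf w})}\le(1-\mu)^{-2}$.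
   Context: $\mathcal C_{d-1}=\{\mathbf u\in\mathbb R^{d-1}:u_i\ge0,\ \sum_iu_i\le1\}$. For $\mathbf v\in\mathbb R^{d-1}$, $\bar{\mathbf v}=(v_1,\dots,v_{d-1},1-\sum_{i=1}^{d-1}v_i)\in\mathbb R^d$. $\mathbf 1$ is the all-ones vector in $\mathbb R^{d-1}$, $\preceq$ is the Loewner order, $\|\mathbf x\|_A=\sqrt{\mathbf x^\top A\mathbf x}$, and $\nabla^{-2}\Psi(\tilde{\mathbf w})=(\nabla^2\Psi(\tilde{\mathbf w}))^{-1}$. *)

(* Defs.v *)
From HB Require Import structures.
From mathcomp Require Import all_boot all_order all_algebra.
From mathcomp Require Import all_classical all_reals all_analysis.
Set Implicit Arguments. Unset Strict Implicit. Unset Printing Implicit Defensive.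
Import Order.TTheory GRing.Theory Num.Theory.
Import numFieldNormedType.Exports.
Local Open Scope ring_scope.

(* bar v = (v_1, ..., v_{d-1}, 1 - sum_i v_i) *)
Definition bar (R : pzRingType) (d : nat) (v : 'rV[R]_(d.-1)) : 'rV[R]_d :=
  \row_(i < d) match (insub (nat_of_ord i) : option 'I_(d.-1)) with
               | Some j => v 0 j
               | None => 1 - \sum_(j < d.-1) v 0 j
               end.

Definition in_simplex (R : realDomainType) (n : nat) (u : 'rV[R]_n) : Prop :=
  (forall i, 0 <= u 0 i) /\ \sum_i u 0 i <= 1.

Definition ebasis (R : pzRingType) (n : nat) (i : 'I_n) : 'rV[R]_n := delta_mx 0 i.

Definition grad (R : realType) (n : nat) (g : 'rV[R]_n -> R^o) (x : 'rV[R]_n)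
  : 'cV[R]_n := \col_(i < n) ('D_(@ebasis R n i) g) x.

Definition hess (R : realType) (n : nat) (g : 'rV[R]_n -> R^o) (x : 'rV[R]_n)
  : 'M[R]_n := \matrix_(i < n, j < n) ('D_(@ebasis R n j) ('D_(@ebasis R n i) g)) x.

Definition loewner_le (R : realDomainType) (n : nat) (A B : 'M[R]_n) : Prop :=
  forall x : 'cV[R]_n, 0 <= ((x^T *m (B - A) *m x) 0 0).

Definition mxnorm (R : rcfType) (n : nat) (A : 'M[R]_n) (x : 'cV[R]_n) : R :=
  Num.sqrt ((x^T *m A *m x) 0 0).

Definition Psi (R : realType) (d : nat) (x : 'rV[R]_(d.-1)) : R :=
  - \sum_(i < d) ln (bar x 0 i).

Definition floss (R : realType) (d : nat) (r : 'rV[R]_d) (w : 'rV[R]_(d.-1)) : R :=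
  - ln (\sum_(i < d) r 0 i * bar w 0 i).

(* Main.v *)
Require Import Defs.
From HB Require Import structures.
From mathcomp Require Import all_boot all_order all_algebra.
From mathcomp Require Import all_classical all_reals all_analysis.
From mathcomp Require Import ring lra.
Import Order.TTheory GRing.Theory Num.Theory.
Import numFieldNormedType.Exports.
Local Open Scope ring_scope.
Section S.
Variable R : realType.

Lemma derive_line n (f : 'rV[R]_n -> R^o) (x v : 'rV[R]_n) :
  'D_v f x = 'D_1 (fun h : R => f (h *: v + x)) 0.
Proof.
rewrite /derive; set g1 := fun h => h^-1 *: _; set g2 := fun h => h^-1 *: _.
suff -> : g1 = g2 by [].
by rewrite funeqE /g1 /g2 => h /=; rewrite addr0 scale0r add0r [_%:A]mulr1.
Qed.

Lemma is_derive_lin (b c : R) : is_derive (0:R) 1 (fun t : R => b + t * c) c.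
Proof.
have -> : (fun t : R => b + t * c) = cst b + c \*: (@id R).
  by apply/funext => t /=; rewrite mulrC.
apply: is_derive_eq; rewrite [_%:A]mulr1; exact: add0r.
Qed.

Lemma is_derive_lnlin (b c : R) : 0 < b ->
  is_derive (0:R) 1 (fun t : R => ln (b + t * c)) (c / b).
Proof.
move=> b0.
have dl : derivable (fun t : R => b + t * c) 0 1 by case: (is_derive_lin b c).
have dln : derivable (@ln R) ((fun t : R => b + t * c) 0) 1.
  by rewrite /= mul0r addr0; case: (is_derive1_ln b0).
have D : derivable ((@ln R) \o (fun t : R => b + t * c)) 0 1.
  apply/derivable1_diffP; apply: differentiable_comp; exact/derivable1_diffP.
apply: DeriveDef => //.
have := derive1_comp dl dln; rewrite !derive1E => ->.
rewrite /= mul0r addr0.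
have [_ ->] := is_derive1_ln b0.
by rewrite (@derive_val _ _ _ _ _ _ _ (is_derive_lin b c)) mulrC.
Qed.

Lemma is_derive_invlin (b c : R) : b != 0 ->
  is_derive (0:R) 1 (fun t : R => (b + t * c)^-1) (- (c / b ^+ 2)).
Proof.
move=> b0.
have dl : derivable (fun t : R => b + t * c) 0 1 by case: (is_derive_lin b c).
have nz : (fun t : R => b + t * c) 0 != 0 by rewrite /= mul0r addr0.
apply: DeriveDef; first exact: derivableV.
rewrite deriveV // (@derive_val _ _ _ _ _ _ _ (is_derive_lin b c)) /= mul0r addr0.
rewrite /GRing.scale /=. by rewrite mulNr mulrC.
Qed.

Lemma is_derive_sumf n (F : 'I_n -> R -> R) (dF : 'I_n -> R) :
  (forall i, is_derive (0:R) 1 (F i) (dF i)) ->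
  is_derive (0:R) 1 (fun t => \sum_i F i t) (\sum_i dF i).
Proof.
move=> H; have := is_derive_sum H; by rewrite fct_sumE.
Qed.

Lemma is_derive_negf (F : R -> R) df :
  is_derive (0:R) 1 F df -> is_derive (0:R) 1 (fun t => - F t) (- df).
Proof. move=> H; exact: (is_deriveN H). Qed.

Lemma is_derive_sclf (F : R -> R) (a : R) df :
  is_derive (0:R) 1 F df -> is_derive (0:R) 1 (fun t => a * F t) (a * df).
Proof. move=> H; exact: (is_deriveZ a H). Qed.

Definition lin n (y : 'rV[R]_n) (k : 'I_n.+1) : R :=
  match (insub (nat_of_ord k) : option 'I_n) with
  | Some j => y 0 j | None => - \sum_j y 0 j end.
Arguments lin {n}.

Lemma bar_aff n (x y : 'rV[R]_n) (h : R) k :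
  @bar R n.+1 (h *: y + x) 0 k = @bar R n.+1 x 0 k + h * lin y k.
Proof.
rewrite /bar /lin !mxE /=; case: (insub _) => [j|]; rewrite ?mxE //=.
  by rewrite addrC.
under eq_bigr do rewrite !mxE. rewrite big_split /= -mulr_sumr; ring.
Qed.

Lemma bar_widen n (x : 'rV[R]_n) j : @bar R n.+1 x 0 (widen_ord (leqnSn n) j) = x 0 j.
Proof.
rewrite /bar mxE; case: insubP => [u _ /= E|]; last by rewrite /= ltn_ord.
by congr (x 0 _); apply: val_inj.
Qed.

Lemma bar_max n (x : 'rV[R]_n) : @bar R n.+1 x 0 ord_max = 1 - \sum_j x 0 j.
Proof. by rewrite /bar mxE; case: insubP => [u /=|//]; rewrite ltnn. Qed.

Lemma lin_widen n (x : 'rV[R]_n) j : lin x (widen_ord (leqnSn n) j) = x 0 j.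
Proof.
rewrite /lin; case: insubP => [u _ /= E|]; last by rewrite /= ltn_ord.
by congr (x 0 _); apply: val_inj.
Qed.

Lemma lin_max n (x : 'rV[R]_n) : lin x ord_max = - \sum_j x 0 j.
Proof. by rewrite /lin; case: insubP => [u /=|//]; rewrite ltnn. Qed.

Lemma lin_sum n (v : 'I_n -> R) k :
  \sum_j v j * lin (@ebasis R n j) k = lin (\row_j v j) k.
Proof.
rewrite /lin /ebasis; case: (insub _) => [i|].
  rewrite mxE (bigD1 i) //= big1 ?addr0; first by rewrite mxE !eqxx mulr1.
  by move=> j /negbTE ji; rewrite mxE eq_sym ji andbF mulr0.
rewrite -sumrN; apply: eq_bigr => j _; rewrite mxE.
rewrite (bigD1 j) //= big1 ?addr0; first by rewrite mxE !eqxx mulrN1.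
by move=> i /negbTE ji; rewrite mxE ji andbF.
Qed.


Arguments is_derive_negf {F df}.
Arguments is_derive_sumf {n F dF}.
Arguments is_derive_sclf {F} a {df}.

Lemma near_pos (b c : R) : 0 < b -> \forall h \near (0:R), 0 < b + h * c.
Proof.
move=> b0; have e0 : 0 < b / (`|c| + 1) by rewrite divr_gt0 // ltr_wpDl.
exists (b / (`|c| + 1)) => // z /=; rewrite sub0r normrN => hz.
have c1 : 0 < `|c| + 1 by rewrite ltr_wpDl.
have : `|z * c| < b.
  rewrite normrM; apply: (le_lt_trans (y := `|z| * (`|c| + 1))).
    by rewrite ler_wpM2l // lerDl.
  by rewrite -ltr_pdivlMr.
rewrite ltr_norml => /andP[h1 _]; by rewrite -subr_gt0 opprK addrC in h1.
Qed.

Lemma grad_floss n (r : 'rV[R]_n.+1) (x : 'rV[R]_n) i :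
  0 < \sum_k r 0 k * @bar R n.+1 x 0 k ->
  grad (@floss R n.+1 r) x i 0 =
    - ((\sum_k r 0 k * lin (@ebasis R n i) k) / (\sum_k r 0 k * @bar R n.+1 x 0 k)).
Proof.
move=> S0; rewrite /grad mxE derive_line.
set S := (\sum_k r 0 k * @bar R n.+1 x 0 k); set C := (\sum_k r 0 k * _).
have -> : (fun h : R => @floss R n.+1 r (h *: @ebasis R n i + x)) =
          (fun h => - ln (S + h * C)).
  apply/funext => h; rewrite /floss; congr (- ln _).
  rewrite /S /C mulr_sumr -big_split /=; apply: eq_bigr => k _.
  by rewrite bar_aff; ring.
by rewrite (@derive_val _ _ _ _ _ _ _ (is_derive_negf (is_derive_lnlin _ C S0))).
Qed.

Lemma dPsi n (y e : 'rV[R]_n) : (forall k, 0 < @bar R n.+1 y 0 k) ->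
  'D_e (@Psi R n.+1) y = - \sum_k (lin e k / @bar R n.+1 y 0 k).
Proof.
move=> yp; rewrite derive_line.
have -> : (fun h : R => @Psi R n.+1 (h *: e + y)) =
          (fun h => - \sum_k ln (@bar R n.+1 y 0 k + h * lin e k)).
  by apply/funext => h; rewrite /Psi; congr (- _); apply: eq_bigr => k _; rewrite bar_aff.
have D := is_derive_negf (is_derive_sumf (fun k => is_derive_lnlin _ (lin e k) (yp k))).
by rewrite (@derive_val _ _ _ _ _ _ _ D).
Qed.

Lemma hess_Psi n (y : 'rV[R]_n) i j : (forall k, 0 < @bar R n.+1 y 0 k) ->
  hess (@Psi R n.+1) y i j =
  \sum_k (lin (@ebasis R n i) k * lin (@ebasis R n j) k / (@bar R n.+1 y 0 k) ^+ 2).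
Proof.
move=> yp; rewrite /hess mxE derive_line.
set G := fun h : R => - \sum_k lin (@ebasis R n i) k *
   (@bar R n.+1 y 0 k + h * lin (@ebasis R n j) k)^-1.
rewrite (@near_eq_derive _ _ _ _ G).
  have yp' : forall k, @bar R n.+1 y 0 k != 0 by move=> k; rewrite gt_eqF.
  have D := is_derive_negf (is_derive_sumf (fun k => is_derive_sclf
     (lin (@ebasis R n i) k) (is_derive_invlin _ (lin (@ebasis R n j) k) (yp' k)))).
  rewrite (@derive_val _ _ _ _ _ _ _ D) -sumrN; apply: eq_bigr => k _.
  by rewrite mulrN opprK mulrA.
have H : \forall h \near (0:R), forall k, 0 < @bar R n.+1 y 0 k + h * lin (@ebasis R n j) k.
  apply: (@filter_forall _ _ _ (nbhs (0:R)) _) => k; exact: near_pos.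
move: H; apply: filterS => h hp.
rewrite dPsi; last by move=> k; rewrite bar_aff.
by rewrite /G; congr (- _); apply: eq_bigr => k _; rewrite bar_aff.
Qed.


Lemma quadE n (x : 'cV[R]_n) (A : 'M[R]_n) :
  (x^T *m A *m x) 0 0 = \sum_i \sum_j x i 0 * A i j * x j 0.
Proof.
rewrite mxE exchange_big /=; apply: eq_bigr => j _; rewrite mxE mulr_suml.
by apply: eq_bigr => i _; rewrite mxE.
Qed.

Lemma linE n (x g : 'cV[R]_n) : (x^T *m g) 0 0 = \sum_i x i 0 * g i 0.
Proof. by rewrite mxE; apply: eq_bigr => i _; rewrite mxE. Qed.

Lemma quad_sum n m (v : 'I_n -> R) (l : 'I_n -> 'I_m -> R) (c : 'I_m -> R) :
  \sum_i \sum_j v i * (\sum_k l i k * l j k * c k) * v j =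
  \sum_k (\sum_i v i * l i k) * (\sum_j v j * l j k) * c k.
Proof.
transitivity (\sum_k \sum_i \sum_j v i * l i k * (v j * l j k) * c k); last first.
  apply: eq_bigr => k _; rewrite big_distrlr mulr_suml; apply: eq_bigr => i _.
  by rewrite mulr_suml.
rewrite [RHS]exchange_big; apply: eq_bigr => i _ /=.
rewrite [RHS]exchange_big; apply: eq_bigr => j _ /=.
rewrite mulr_sumr mulr_suml; apply: eq_bigr => k _; ring.
Qed.

Lemma lin_form n m (v : 'I_n -> R) (l : 'I_n -> 'I_m -> R) (r : 'I_m -> R) S :
  \sum_i v i * - ((\sum_k r k * l i k) / S) =
  - ((\sum_k r k * (\sum_i v i * l i k)) / S).
Proof.
transitivity ((- \sum_i \sum_k v i * (r k * l i k)) / S).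
  rewrite -sumrN mulr_suml; apply: eq_bigr => i _; rewrite -mulr_sumr; ring.
rewrite mulNr exchange_big /=; congr (- (_ / S)); apply: eq_bigr => k _.
rewrite mulr_sumr; apply: eq_bigr => i _; ring.
Qed.

Lemma key n (r a b : 'I_n -> R) (S c : R) :
  (forall k, 0 <= r k) -> (forall k, 0 < b k) -> 0 < c -> 0 < S ->
  c * \sum_k r k * b k <= S ->
  ((\sum_k r k * a k) / S) ^+ 2 <= c ^-2 * \sum_k (a k / b k) ^+ 2.
Proof.
move=> r0 b0 c0 S0 hS.
set Q := \sum_k (a k / b k) ^+ 2; set T := \sum_k r k * b k; set A := \sum_k r k * a k.
have Q0 : 0 <= Q by apply: sumr_ge0 => k _; exact: sqr_ge0.
have T0 : 0 <= T by apply: sumr_ge0 => k _; rewrite mulr_ge0 // ltW.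
have hq : forall k, `|a k / b k| <= Num.sqrt Q.
  move=> k; rewrite -sqrtr_sqr ler_sqrt //.
  rewrite /Q (bigD1 k) //= lerDl; apply: sumr_ge0 => j _; exact: sqr_ge0.
have hA : `|A| <= Num.sqrt Q * T.
  apply: (le_trans (ler_norm_sum _ _ _)).
  rewrite /T mulr_sumr; apply: ler_sum => k _.
  have -> : r k * a k = (r k * b k) * (a k / b k) by field; rewrite gt_eqF.
  rewrite normrM (ger0_norm (x := r k * b k)); last by rewrite mulr_ge0 // ltW.
  by rewrite mulrC ler_wpM2r // mulr_ge0 // ltW.
have hA2 : A ^+ 2 <= Q * T ^+ 2.
  rewrite -(sqr_sqrtr Q0) -exprMn -real_normK ?num_real //.
  apply: lerXn2r => //; rewrite nnegrE //.
  exact: mulr_ge0 (sqrtr_ge0 _) T0.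
have hT : (c * T) ^+ 2 <= S ^+ 2.
  apply: lerXn2r => //; rewrite nnegrE //; [exact: mulr_ge0 (ltW c0) T0|exact: ltW].
have hT2 : T ^+ 2 <= c ^- 2 * S ^+ 2.
  by rewrite mulrC ler_pdivlMr ?exprn_gt0 // mulrC -exprMn.
rewrite expr_div_n ler_pdivrMr ?exprn_gt0 //.
apply: (le_trans hA2).
rewrite mulrAC mulrC; have HH := ler_wpM2r Q0 hT2; exact HH.
Qed.

End S.

Lemma lin_comm (R : realType) n (x g : 'cV[R]_n) : (x^T *m g) 0 0 = (g^T *m x) 0 0.
Proof. by rewrite !linE; apply: eq_bigr => i _; rewrite mulrC. Qed.

Theorem lemma13 (R : realType) (d : nat) (r : 'rV[R]_d) (mu : R)
    (wt : 'rV[R]_(d.-1)) :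
  (2 <= d)%N ->
  (forall i, 0 <= r 0 i <= 1) -> r != 0 ->
  0 < mu < 1 ->
  in_simplex wt -> (forall i, 0 < bar wt 0 i) ->
  let w := (1 - mu) *: wt + mu *: const_mx (d%:R^-1) in
  loewner_le (grad (floss r) w *m (grad (floss r) w)^T)
             ((1 - mu) ^- 2 *: hess (@Psi R d) wt)
  /\ mxnorm (invmx (hess (@Psi R d) wt)) (grad (floss r) w) ^+ 2 <= (1 - mu) ^- 2.
Proof.
case: d r wt => [|[|m]] r wt H2 //.
move=> hr rnz /andP[mu0 mu1] _ hb w.
have c0 : 0 < 1 - mu by rewrite subr_gt0.
have hbw : forall k, @bar R m.+2 w 0 k = (1 - mu) * @bar R m.+2 wt 0 k + mu / (m.+2)%:R.
  move=> k; rewrite /w /bar !mxE; case: (insub _) => [j|]; rewrite ?mxE.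
    by rewrite /GRing.scale /=; ring.
  under eq_bigr do rewrite !mxE.
  rewrite big_split /= -mulr_sumr sumr_const card_ord.
  have hd : (m.+2)%:R != 0 :> R by rewrite pnatr_eq0.
  rewrite -mulr_natr /GRing.scale /=; field => //.
have hwp : forall k, 0 < @bar R m.+2 w 0 k.
  move=> k; rewrite hbw; apply: ltr_wpDl; first by rewrite mulr_ge0 // ltW.
  by rewrite divr_gt0 // ltr0n.
have [k0 rk0] : exists k, 0 < r 0 k.
  have : [exists k, r 0 k != 0].
    apply: contraNT rnz => /existsPn H; apply/eqP/matrixP => i j.
    by rewrite ord1 mxE; move/negPn/eqP: (H j).
  case/existsP => k rk; exists k; rewrite lt_def rk /=.
  by case/andP: (hr k).
have r0 : forall k, 0 <= r 0 k by move=> k; case/andP: (hr k).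
set S := \sum_k r 0 k * @bar R m.+2 w 0 k.
have S0 : 0 < S.
  rewrite /S (bigD1 k0) //=.
  have := mulr_gt0 rk0 (hwp k0).
  have : 0 <= \sum_(i < m.+2 | i != k0) r 0 i * @bar R m.+2 w 0 i.
    by apply: sumr_ge0 => i _; rewrite mulr_ge0 // ltW.
  lra.
have hS : (1 - mu) * \sum_k r 0 k * @bar R m.+2 wt 0 k <= S.
  rewrite mulr_sumr; apply: ler_sum => k _; rewrite hbw mulrDr mulrCA lerDl.
  by rewrite mulr_ge0 // divr_ge0 ?ler0n // ltW.
set g := grad (floss r) w.
set H := hess (@Psi R m.+2) wt.
have gE : forall i, g i 0 = - ((\sum_k r 0 k * @lin R _ (@ebasis R m.+1 i) k) / S).
  by move=> i; rewrite /g grad_floss.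
have HE : forall i j, H i j = \sum_k (@lin R _ (@ebasis R m.+1 i) k * @lin R _ (@ebasis R m.+1 j) k
     / (@bar R m.+2 wt 0 k) ^+ 2).
  by move=> i j; rewrite /H hess_Psi.
pose a (x : 'cV[R]_m.+1) k := @lin R m.+1 (\row_i x i 0) k.
have qform : forall x, (x^T *m H *m x) 0 0 =
    \sum_k (a x k / @bar R m.+2 wt 0 k) ^+ 2.
  move=> x; rewrite quadE.
  under eq_bigr do under eq_bigr do rewrite HE.
  rewrite (@quad_sum R _ _ (fun i => x i 0) (fun i k => @lin R _ (@ebasis R m.+1 i) k)
     (fun k => ((@bar R m.+2 wt 0 k) ^+ 2)^-1)).
  apply: eq_bigr => k _; rewrite /a !lin_sum.
  by rewrite expr_div_n expr2.
have lform : forall x, (x^T *m g) 0 0 = - ((\sum_k r 0 k * a x k) / S).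
  move=> x; rewrite linE.
  under eq_bigr do rewrite gE.
  rewrite (@lin_form R _ _ (fun i => x i 0) (fun i k => @lin R _ (@ebasis R m.+1 i) k)
     (fun k => r 0 k)).
  by congr (- (_ / _)); apply: eq_bigr => k _; rewrite /a lin_sum.
set c := (1 - mu) ^- 2.
have cpos : 0 < c by rewrite /c invr_gt0 exprn_gt0.
have Eform : forall x : 'cV[R]_m.+1,
    (x^T *m (c *: H - g *m g^T) *m x) 0 0 = c * (x^T *m H *m x) 0 0 - (x^T *m g) 0 0 ^+ 2.
  move=> x; rewrite mulmxBr mulmxBl -scalemxAr -scalemxAl.
  rewrite [LHS]mxE [X in X + _ = _]mxE [X in _ + X = _]mxE; congr (_ + - _).
  rewrite !mulmxA -(mulmxA (x^T *m g)) mxE big_ord1 -lin_comm [in RHS]expr2. by [].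
have ineq : forall x : 'cV[R]_m.+1, (x^T *m g) 0 0 ^+ 2 <= c * (x^T *m H *m x) 0 0.
  move=> x; rewrite lform qform sqrrN.
  apply: (@key R _ (fun k => r 0 k) (a x) (fun k => @bar R m.+2 wt 0 k) S (1 - mu)) => //.
have loew : loewner_le (g *m g^T) (c *: H).
  by move=> x; rewrite Eform subr_ge0.
split => //.
have posdef0 : forall x : 'cV[R]_m.+1, (x^T *m H *m x) 0 0 = 0 -> x = 0.
  move=> x; rewrite qform => /psumr_eq0P H0.
  apply/matrixP => j k; rewrite ord1 mxE.
  have := H0 (fun i _ => sqr_ge0 _) (widen_ord (leqnSn _) j) isT.
  rewrite /a lin_widen mxE => /eqP; rewrite sqrf_eq0 mulf_eq0 invr_eq0.
  by rewrite (gt_eqF (hb _)) orbF => /eqP.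
have Hunit : H \in unitmx.
  rewrite -row_free_unit -kermx_eq0; apply/eqP/row_matrixP => i; rewrite row0.
  set u := row i (kermx H).
  have uH : u *m H = 0 by apply/sub_kermxP; exact: row_sub.
  have : u^T = 0 by apply: posdef0; rewrite trmxK uH mul0mx mxE.
  by move/(congr1 trmx); rewrite trmxK trmx0.
set v := invmx H *m g.
have Hv : H *m v = g by rewrite /v mulmxA mulmxV // mul1mx.
set q := (g^T *m invmx H *m g) 0 0.
have qE : q = (v^T *m g) 0 0 by rewrite /q -mulmxA lin_comm.
have := ineq v.
rewrite -mulmxA Hv -qE => hq.
have q0 : 0 <= q by nra.
have qc : q <= c by nra.
by rewrite /mxnorm sqr_sqrtr.

Qed.
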